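(* Let $K$ be a finite field, $G$ a finite group and $\ell\ge1$. There exists a self-dual quasi-$G$ code over $K$ of index $\ell$ (i.e. a right $KG$-submodule $\mathcal{C}\le KG^\ell$ with $\mathcal{C}=\mathcal{C}^\perp$) if and only if one of the following holds: (i) $|K|\equiv1\pmod 4$ and $2\mid\ell$; (ii) $|K|\equiv3\pmod 4$ and $4\mid\ell$; (iii) $|K|$ is even and ($2\mid\ell$ or $2\mid|G|$).
   Context: Fix an ordering $g_1,\ldots,g_n$ of $G$ and let $\varphi:KG\to K^n$, $\sum_i a_ig_i\mapsto(a_1,\ldots,a_n)$. On $KG^\ell=KG\oplus\cdots\oplus KG$ ($\ell$ copies) define the Euclidean bilinear form $\langle (a_1,\ldots,a_\ell),(b_1,\ldots,b_\ell)\rangle=\sum_{i=1}^\ell\varphi(a_i)\cdot\varphi(b_i)$, where $\cdot$ is the standard inner product on $K^n$. For a right $KG$-submodule $\mathcal{C}\le KG^\ell$ (a quasi-$G$ code of index $\ell$), $\mathcal{C}^\perp=\{v\in KG^\ell:\langle v,c\rangle=0\ \text{for all } c\in\mathcal{C}\}$, and $\mathcal{C}$ is self-dual if $\mathcal{C}=\mathcal{C}^\perp$. *)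

(* Defs.v *)
From HB Require Import structures.
From mathcomp Require Import all_boot all_order all_algebra all_fingroup.
Set Implicit Arguments. Unset Strict Implicit. Unset Printing Implicit Defensive.
Import GRing.Theory.
Local Open Scope ring_scope.

(* The group algebra KG, as coefficient functions G -> K
   (the finite group G is the whole carrier of gT). *)
Definition grpalg (K : finFieldType) (gT : finGroupType) := {ffun gT -> K}.

Definition qvec (K : finFieldType) (gT : finGroupType) (l : nat) :=
  {ffun 'I_l -> {ffun gT -> K}}.

(* Product in KG:  (sum_g a_g g)(sum_h b_h h) has coefficient
   sum_g a_g b_{g^-1 k} at k. *)
Definition ga_mul (K : finFieldType) (gT : finGroupType)
    (a b : {ffun gT -> K}) : {ffun gT -> K} :=
  [ffun k => \sum_(g : gT) a g * b ((g^-1 * k)%g)].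

Definition qrmul (K : finFieldType) (gT : finGroupType) (l : nat)
    (x : qvec K gT l) (r : {ffun gT -> K}) : qvec K gT l :=
  [ffun i => ga_mul (x i) r].

Definition is_quasiG_code (K : finFieldType) (gT : finGroupType) (l : nat)
    (C : {set qvec K gT l}) : Prop :=
  [/\ (0 : qvec K gT l) \in C,
      (forall x y, x \in C -> y \in C -> x + y \in C) &
      (forall x (r : {ffun gT -> K}), x \in C -> qrmul x r \in C)].

Definition qform (K : finFieldType) (gT : finGroupType) (l : nat)
    (a b : qvec K gT l) : K :=
  \sum_(i < l) \sum_(g : gT) a i g * b i g.

Definition qdual (K : finFieldType) (gT : finGroupType) (l : nat)
    (C : {set qvec K gT l}) : {set qvec K gT l} :=
  [set v | [forall c in C, qform v c == 0]].

Definition self_dual (K : finFieldType) (gT : finGroupType) (l : nat)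
    (C : {set qvec K gT l}) : Prop := C = qdual C.

(* Main.v *)
Require Import Defs.
From HB Require Import structures.
From mathcomp Require Import all_boot all_order all_algebra all_fingroup.
From mathcomp Require Import pgroup sylow cyclic finfield zify ring.
Set Implicit Arguments. Unset Strict Implicit. Unset Printing Implicit Defensive.
Import GRing.Theory.
Local Open Scope ring_scope.

Section FF.
Variable K : finFieldType.

Lemma odd_cardK : odd #|K| = ((2%:R : K) != 0).
Proof.
have [p pr pc] := finPcharP K.
have e : #|K| = (p ^ logn p #|K|)%N by exact: (card_pprimeChar pc).
have lg : (0 < logn p #|K|)%N.
  case: (logn p #|K|) e => // /= e1. have := finNzRing_gt1 K. by rewrite e1.
rewrite -(dvdn_pcharf pc) e oddX -(prednK lg) /=.
rewrite dvdn_prime2 //.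
case: (even_prime pr) => [e2|op]; first by rewrite e2. by rewrite op; case: eqP => // e2; rewrite e2 in op.
Qed.
End FF.


Section FF.
Variable K : finFieldType.
Hypothesis two : (2%:R : K) != 0.

Lemma no_sqrtm1 : (#|K| %% 4 = 3)%N -> forall x : K, x ^+ 2 != -1.
Proof.
move=> h x; apply/eqP=> hx.
have e : #|K| = (4 * (#|K| %/ 4) + 3)%N by rewrite {1}(divn_eq #|K| 4) h mulnC.
have := expf_card x; rewrite e exprD exprM.
have -> : x ^+ 4 = 1 by rewrite (_ : 4 = 2 * 2)%N // exprM hx sqrrN expr1n.
rewrite expr1n mul1r exprS hx mulrN1 => /eqP.
rewrite -subr_eq0 -opprD oppr_eq0 -mulr2n -mulr_natl mulf_eq0 (negbTE two) /= => /eqP x0.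
by move: hx; rewrite x0 expr0n /= => /eqP; rewrite eq_sym oppr_eq0 oner_eq0.
Qed.

Lemma sqrtm1 : (#|K| %% 4 = 1)%N -> exists i : K, i ^+ 2 = -1.
Proof.
move=> h.
set n := #|K|.-1.
have q1 : (1 < #|K|)%N := finNzRing_gt1 K.
have en : n = (4 * (#|K| %/ 4))%N.
  by rewrite /n {1}(divn_eq #|K| 4) h addn1 /= mulnC.
have n0 : (0 < n)%N by rewrite /n -subn1 subn_gt0.
have [z _ pz] : exists2 z, z \in [seq x <- enum K | x != 0] & n.-primitive_root z.
  apply/hasP; apply: has_prim_root => //.
  - apply/allP=> x; rewrite mem_filter => /andP[x0 _].
    rewrite unity_rootE; apply/eqP; apply: (mulIf x0); rewrite mul1r -exprSr /n.
    by rewrite prednK ?expf_card // (leq_trans _ q1).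
  - by rewrite filter_uniq ?enum_uniq.
  - apply: leq_trans (card_size _); rewrite /n -(cardC1 (0:K)); apply: subset_leq_card; apply/subsetP=> x; rewrite !inE mem_filter mem_enum andbT /=.
    by [].

set k := (#|K| %/ 4)%N.
have k0 : (0 < k)%N by move: n0; rewrite en muln_gt0.
exists (z ^+ k).
have h4 : (z ^+ k ^+ 2) ^+ 2 = 1.
  by rewrite -!exprM (_ : (k*(2*2) = n)%N) ?prim_expr_order // en /k; lia.
have h2 : z ^+ k ^+ 2 != 1.
  rewrite -exprM -(prim_order_dvd pz) en mulnC dvdn_pmul2l //.
have : (z ^+ k ^+ 2 - 1) * (z ^+ k ^+ 2 + 1) = 0.
  by rewrite -subr_sqr h4 expr1n subrr.
move=> /eqP; rewrite mulf_eq0 subr_eq0 (negbTE h2) /= addr_eq0 => /eqP //.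
Qed.
End FF.
Section SS.
Variable K : finFieldType.
Hypothesis two : (2%:R : K) != 0.

Lemma sum2sq : exists a b : K, a ^+ 2 + b ^+ 2 = -1.
Proof.
pose Sq := [set x ^+ 2 | x : K].
pose rt (s : K) : K := odflt 0 [pick x | x ^+ 2 == s].
have rtP s : s \in Sq -> rt s ^+ 2 = s.
  case/imsetP=> x _ ->; rewrite /rt; case: pickP => [y /eqP //|/(_ x)].
  by rewrite eqxx.
pose A := [set rt s | s in Sq].
pose B := [set - y | y in A].
have cover : [set: K] \subset A :|: B.
  apply/subsetP=> x _; rewrite inE.
  have sx : x ^+ 2 \in Sq by apply/imsetP; exists x.
  have := rtP _ sx => /eqP; rewrite -subr_eq0 subr_sqr mulf_eq0 subr_eq0 addr_eq0.
  case/orP=> /eqP e.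
    by apply/orP; left; apply/imsetP; exists (x ^+ 2) => //.
  apply/orP; right; apply/imsetP; exists (- x); last by rewrite opprK.
  by apply/imsetP; exists (x ^+ 2) => //; rewrite e opprK.
have zA : 0 \in A.
  apply/imsetP; exists 0; first by apply/imsetP; exists 0; rewrite // expr0n.
  have s0 : (0:K) \in Sq by apply/imsetP; exists 0; rewrite // expr0n.
  by have := rtP 0 s0 => /eqP; rewrite expf_eq0 /= => /eqP.
have zB : 0 \in B by apply/imsetP; exists 0; rewrite ?oppr0.
have cA : (#|A| <= #|Sq|)%N by apply: leq_imset_card.
have cB : #|B| = #|A| by apply: card_imset; apply: oppr_inj.
have cAB : (0 < #|A :&: B|)%N by apply/card_gt0P; exists 0; rewrite inE zA.
have lt : (#|K| < #|Sq| + #|Sq|)%N.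
  have := subset_leq_card cover; rewrite cardsT cardsU cB.
  move=> h; apply: (leq_trans _ (leq_add cA cA)); have := subset_leq_card (subsetIl A B); move: h cAB; set a := #|A|; set c := #|A :&: B|; set q := #|K|. lia.
pose Sq' := [set -1 - s | s in Sq].
have c' : #|Sq'| = #|Sq|.
  by apply: card_imset => x y /eqP; rewrite (inj_eq (addrI _)) (inj_eq oppr_inj) => /eqP.
have : (0 < #|Sq :&: Sq'|)%N.
  have := cardsUI Sq Sq'; have := max_card (Sq :|: Sq'); rewrite c'; set u := #|Sq :|: Sq'|; set i := #|Sq :&: Sq'|; set s := #|Sq|; set q := #|K|. move: lt; rewrite -/s -/q. lia.
case/card_gt0P=> s; rewrite inE => /andP[/imsetP[a _ ->] /imsetP[t /imsetP[b _ ->] e]].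
by exists a, b; rewrite e subrK.
Qed.
End SS.


Section Det.
Variable K : fieldType.

Lemma det_swap d : \det (block_mx 0 1%:M 1%:M 0 : 'M[K]_(d + d)) = (-1) ^+ d.
Proof.
have -> : (block_mx 0 1%:M 1%:M 0 : 'M[K]_(d + d)) =
   block_mx 1%:M 0 1%:M 1%:M *m block_mx 1%:M (-1)%:M 0 1%:M *m block_mx 1%:M 0 1%:M 1%:M
   *m block_mx 1%:M 0 0 (-1)%:M.
  rewrite !mulmx_block !(mul1mx, mulmx1, mul0mx, mulmx0, addr0, add0r).
  congr block_mx; rewrite -?raddfD /= -?scalar_mxM ?subrr ?addNr ?addr0 ?mul0r ?mulN1r ?opprK ?raddf0 //=.
rewrite !det_mulmx !det_lblock det_ublock !det1 !mul1r det_scalar.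
by [].
Qed.


Lemma det_block0 d (X Z : 'M[K]_d) :
  \det (block_mx 0 X X^T Z) = (-1) ^+ d * \det X ^+ 2.
Proof.
have -> : block_mx 0 X X^T Z = block_mx 0 1%:M 1%:M 0 *m block_mx X^T Z 0 X.
  by rewrite mulmx_block !(mul1mx, mul0mx, addr0, add0r).
by rewrite det_mulmx det_swap det_ublock det_tr expr2.
Qed.

Lemma selfdual_disc d (B : 'M[K]_(d, d + d)) :
  \rank B = d -> B *m B^T = 0 -> exists x : K, x ^+ 2 = (-1) ^+ d.
Proof.
move=> rB BB.
pose U := row_ebase B; pose L := col_ebase B.
have eB : B = L *m usubmx U.
  rewrite -{1}(mulmx_ebase B) rB pid_mx_row -/U -/L -mulmxA; congr (_ *m _).
  by rewrite -{1}(vsubmxK U) mul_row_col mul1mx mul0mx addr0.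
have uU : usubmx U *m (usubmx U)^T = 0.
  have uL : L \in unitmx by apply: col_ebase_unit.
  have uLt : L^T \in unitmx by rewrite unitmx_tr.
  move: BB; rewrite eB trmx_mul !mulmxA -(mulmxA L) => /(congr1 (mulmx (invmx L))).
  rewrite -mulmxA mulKmx // mulmx0 => /(congr1 (mulmx^~ (invmx L^T))).
  by rewrite mulmxK // mul0mx.
have uUd : U \in unitmx by apply: row_ebase_unit.
have eG : col_mx (usubmx U) (dsubmx U) *m (col_mx (usubmx U) (dsubmx U))^T = block_mx 0 (usubmx U *m (dsubmx U)^T)
                       (usubmx U *m (dsubmx U)^T)^T (dsubmx U *m (dsubmx U)^T).
  by rewrite tr_col_mx mul_col_row uU trmx_mul trmxK.
rewrite vsubmxK in eG.
have := congr1 determinant eG; rewrite det_block0 det_mulmx det_tr => e.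
set X := usubmx U *m (dsubmx U)^T in e.
have dU : \det U != 0 by rewrite -unitfE -unitmxE.
have dX : \det X != 0.
  apply: contra dU => /eqP dX0; have : \det U ^+ 2 == 0 by rewrite expr2 e dX0 expr0n mulr0.
  by rewrite expf_eq0.
exists (\det U / \det X).
by rewrite expr_div_n expr2 e mulfK // expf_neq0.
Qed.


Lemma selfdual_disc' d n (B : 'M[K]_(d, n)) : n = (d + d)%N ->
  \rank B = d -> B *m B^T = 0 -> exists x : K, x ^+ 2 = (-1) ^+ d.
Proof. by move=> e; subst n; apply: selfdual_disc. Qed.

End Det.
Section Core.
Variable K : finFieldType.
Lemma core (T : finType) (S : {set {ffun T -> K}}) :
  (0 \in S) -> (forall x y, x \in S -> y \in S -> x + y \in S) ->
  (forall c x, x \in S -> [ffun t => c * x t] \in S) ->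
  S = [set v : {ffun T -> K} | [forall s in S, \sum_t v t * s t == 0]] ->
  exists d, #|T| = (d + d)%N /\ exists x : K, x ^+ 2 = (-1) ^+ d.
Proof.
move=> S0 SD SZ SS.
pose n := #|T|.
pose gu (u : 'rV[K]_n) : {ffun T -> K} := [ffun t => u 0 (enum_rank t)].
pose A : 'M[K]_(#|S|, n) := \matrix_(i < #|S|, j < n) (enum_val (A := S) i : {ffun T -> K}) (enum_val j).
have sumT (F : T -> K) : \sum_t F t = \sum_(j < n) F (enum_val j).
  by rewrite (reindex _ (onW_bij _ (enum_val_bij T))).
have SSP v : (v \in S) = [forall s in S, \sum_t v t * s t == 0].
  by rewrite {1}SS inE.
have O u : (u *m A^T == 0) = (gu u \in S).
  rewrite SSP; apply/eqP/forall_inP.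
    move=> h s sS; move/rowP: h => /(_ (enum_rank_in sS s)).
    rewrite !mxE => e; apply/eqP; rewrite sumT -[RHS]e; apply: eq_bigr => j _.
    by rewrite !mxE ffunE enum_valK enum_rankK_in.
  move=> h; apply/rowP=> i; rewrite !mxE.
  have e := eqP (h _ (enum_valP i)); rewrite sumT in e; rewrite -[RHS]e; apply: eq_bigr => j _.
  by rewrite !mxE ffunE enum_valK.
have M u : (u <= A)%MS = (gu u \in S).
  apply/idP/idP.
    case/submxP=> w ->; rewrite mulmx_sum_row.
    have gD x y : gu (x + y) = gu x + gu y by apply/ffunP=> t; rewrite !ffunE mxE.
    have g0 : gu 0 = 0 by apply/ffunP=> t; rewrite !ffunE mxE.
    apply: (big_ind (fun x => gu x \in S)) => //; first by rewrite g0.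
      by move=> x y hx hy; rewrite gD SD.
    move=> i _.
    have -> : gu (w 0 i *: row i A) = [ffun t => w 0 i * (enum_val i : {ffun T -> K}) t].
      by apply/ffunP=> t; rewrite !ffunE !mxE enum_rankK.
    by apply: SZ; apply: enum_valP.
  move=> h; have -> : u = row (enum_rank_in h (gu u)) A.
    by apply/rowP=> j; rewrite !mxE enum_rankK_in // ffunE enum_valK.
  exact: row_sub.
have KA (u : 'rV_n) : (u <= kermx A^T)%MS = (u <= A)%MS by rewrite sub_kermx O M.
have sAK : (A <= kermx A^T)%MS by apply/row_subP=> i; rewrite KA row_sub.
have sKA : (kermx A^T <= A)%MS by apply/row_subP=> i; rewrite -KA row_sub.
have rk : \rank A = (n - \rank A)%N.
  have e1 := mxrankS sAK; have e2 := mxrankS sKA.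
  rewrite mxrank_ker mxrank_tr in e1 e2; apply/eqP; rewrite eqn_leq e1 e2 //.
have rn : (\rank A <= n)%N by apply: rank_leq_col.
have nd : #|T| = (\rank A + \rank A)%N by move: rk rn; rewrite /n; set r := \rank A; lia.
exists (\rank A); split; first exact: nd.
have AA : A *m A^T = 0 by apply/eqP; rewrite -sub_kermx.
apply: (@selfdual_disc' _ _ n (row_base A)).
- exact: nd.
- exact: (eqP (row_base_free A)).
- have : (row_base A <= A)%MS by rewrite eq_row_base.
  case/submxP=> X ->; by rewrite trmx_mul mulmxA -(mulmxA X) AA mulmx0 mul0mx.
Qed.

End Core.


Section Ex.
Variables (K : finFieldType) (gT : finGroupType).

Definition Ecode l := exists C : {set qvec K gT l}, is_quasiG_code C /\ self_dual C.

Lemma qdualP l (C : {set qvec K gT l}) v :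
  reflect (forall c, c \in C -> qform v c = 0) (v \in qdual C).
Proof.
rewrite inE; apply: (iffP forall_inP) => h c /h; first by move/eqP.
by move=> ->.
Qed.

Lemma qform0r l (v : qvec K gT l) : qform v 0 = 0.
Proof. by rewrite /qform big1 // => i _; rewrite big1 // => g _; rewrite !ffunE mulr0. Qed.

Lemma Ecode0 : Ecode 0.
Proof.
exists setT; split; first by split => *; rewrite inE.
apply/setP=> v; rewrite !inE; apply/esym/forall_inP=> c _.
by rewrite /qform big_ord0.
Qed.

Lemma EcodeD l1 l2 : Ecode l1 -> Ecode l2 -> Ecode (l1 + l2).
Proof.
move=> [C1 [[C10 C1D C1M] sd1]] [C2 [[C20 C2D C2M] sd2]].
pose lp (v : qvec K gT (l1 + l2)) : qvec K gT l1 := [ffun i => v (lshift l2 i)].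
pose rp (v : qvec K gT (l1 + l2)) : qvec K gT l2 := [ffun i => v (rshift l1 i)].
pose jn (a : qvec K gT l1) (b : qvec K gT l2) : qvec K gT (l1 + l2) :=
  [ffun i => match split i with inl j => a j | inr j => b j end].
have lpj a b : lp (jn a b) = a.
  by apply/ffunP=> i; rewrite !ffunE (unsplitK (inl i)).
have rpj a b : rp (jn a b) = b.
  by apply/ffunP=> i; rewrite !ffunE (unsplitK (inr i)).
have qsplit v w : qform v w = qform (lp v) (lp w) + qform (rp v) (rp w).
  by rewrite /qform big_split_ord; congr (_ + _); apply: eq_bigr => i _; rewrite !ffunE.
exists [set v | (lp v \in C1) && (rp v \in C2)]; split.
  split.
  - rewrite inE; apply/andP; split.
      by rewrite (_ : lp 0 = 0) //; apply/ffunP=> i; rewrite !ffunE.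
    by rewrite (_ : rp 0 = 0) //; apply/ffunP=> i; rewrite !ffunE.
  - move=> x y; rewrite !inE => /andP[x1 x2] /andP[y1 y2]; apply/andP; split.
      by rewrite (_ : lp (x + y) = lp x + lp y) ?C1D //; apply/ffunP=> i; rewrite !ffunE.
    by rewrite (_ : rp (x + y) = rp x + rp y) ?C2D //; apply/ffunP=> i; rewrite !ffunE.
  - move=> x r; rewrite !inE => /andP[x1 x2]; apply/andP; split.
      by rewrite (_ : lp (qrmul x r) = qrmul (lp x) r) ?C1M //; apply/ffunP=> i; rewrite !ffunE.
    by rewrite (_ : rp (qrmul x r) = qrmul (rp x) r) ?C2M //; apply/ffunP=> i; rewrite !ffunE.
apply/setP=> v; rewrite inE; apply/idP/idP.
  case/andP=> v1 v2; apply/qdualP=> c; rewrite inE => /andP[c1 c2].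
  rewrite qsplit.
  move: v1 v2; rewrite {1}sd1 {1}sd2 => /qdualP h1 /qdualP h2.
  by rewrite h1 // h2 // addr0.
move/qdualP=> h; apply/andP; split.
  rewrite sd1; apply/qdualP=> c cC.
  have := h (jn c 0); rewrite inE lpj rpj cC C20 qsplit lpj rpj qform0r addr0.
  by apply.
rewrite sd2; apply/qdualP=> c cC.
have := h (jn 0 c); rewrite inE lpj rpj cC C10 qsplit lpj rpj qform0r add0r.
by apply.
Qed.

Lemma EcodeM k m : Ecode k -> Ecode (k * m).
Proof.
move=> Ek; elim: m => [|m IH]; first by rewrite muln0; exact: Ecode0.
by rewrite mulnS addnC; apply: EcodeD.
Qed.


Definition tv l (cs : seq K) (g : gT) : qvec K gT l :=
  [ffun j : 'I_l => [ffun k => cs`_j * (k == g)%:R]].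

Lemma sum_delta (f : gT -> K) g : \sum_k f k * (k == g)%:R = f g.
Proof.
rewrite (bigD1 g) //= eqxx mulr1 big1 ?addr0 // => k /negbTE ->; by rewrite mulr0.
Qed.

Lemma qform_tv l (v : qvec K gT l) cs g : qform v (tv l cs g) = \sum_(j < l) cs`_j * v j g.
Proof.
rewrite /qform; apply: eq_bigr => j _.
under eq_bigr => k _ do rewrite !ffunE mulrCA.
by rewrite -mulr_sumr sum_delta.
Qed.

Lemma sum2 (F : 'I_2 -> K) : \sum_j F j = F ord0 + F ord_max.
Proof. by rewrite !big_ord_recl big_ord0 addr0; congr (_ + F _); apply: val_inj. Qed.

Lemma sum4 (F : 'I_4 -> K) : \sum_j F j =
  F (@Ordinal 4 0 isT) + F (@Ordinal 4 1 isT) + F (@Ordinal 4 2 isT) + F (@Ordinal 4 3 isT).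
Proof.
rewrite !big_ord_recl big_ord0 addr0 !addrA.
by congr (F _ + F _ + F _ + F _); apply: val_inj.
Qed.

Lemma ga_mul_scale (c : K) (a r : {ffun gT -> K}) g :
  ga_mul [ffun k => c * a k] r g = c * ga_mul a r g.
Proof. by rewrite !ffunE mulr_sumr; apply: eq_bigr => h _; rewrite ffunE mulrA. Qed.

Lemma ga_mul_lin2 (c d : K) (a b r : {ffun gT -> K}) g :
  ga_mul [ffun k => c * a k + d * b k] r g = c * ga_mul a r g + d * ga_mul b r g.
Proof.
rewrite !ffunE !mulr_sumr -big_split; apply: eq_bigr => h _.
by rewrite ffunE mulrDl !mulrA.
Qed.


Lemma EcodeA (i : K) : i ^+ 2 = -1 -> Ecode 2.
Proof.
move=> hi.
pose C := [set v : qvec K gT 2 | [forall g, v ord_max g == i * v ord0 g]].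
exists C; split.
  split.
  - by rewrite inE; apply/forallP=> g; rewrite !ffunE mulr0.
  - move=> x y; rewrite !inE => /forallP hx /forallP hy; apply/forallP=> g.
    by rewrite !ffunE (eqP (hx g)) (eqP (hy g)) mulrDr.
  - move=> x r; rewrite !inE => /forallP hx; apply/forallP=> g.
    rewrite !ffunE mulr_sumr; apply/eqP/eq_bigr=> h _.
    by rewrite (eqP (hx h)) mulrA.
apply/setP=> v; rewrite inE; apply/idP/idP.
  move/forallP=> hv; apply/qdualP=> c; rewrite inE => /forallP hc.
  rewrite /qform sum2 -big_split /=; apply: big1 => g _.
  rewrite (eqP (hv g)) (eqP (hc g)) mulrACA -expr2 hi mulN1r subrr //.
move/qdualP=> h; apply/forallP=> g.
have := h (tv 2 [:: 1; i] g).
rewrite qform_tv sum2 /= mul1r.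
have -> : tv 2 [:: 1; i] g \in C.
  by rewrite inE; apply/forallP=> k; rewrite !ffunE /= mul1r.
move=> /(_ isT) e.
have e2 : i * (v ord0 g + i * v ord_max g) = i * v ord0 g - v ord_max g.
  by rewrite mulrDr mulrA -expr2 hi mulN1r.
by rewrite e mulr0 in e2; apply/eqP/esym/eqP; rewrite -subr_eq0 -e2.
Qed.


Lemma EcodeB (a b : K) : a ^+ 2 + b ^+ 2 = -1 -> Ecode 4.
Proof.
move=> hab.
pose o0 := @Ordinal 4 0 isT. pose o1 := @Ordinal 4 1 isT.
pose o2 := @Ordinal 4 2 isT. pose o3 := @Ordinal 4 3 isT.
pose C := [set v : qvec K gT 4 | [forall g, (v o2 g == a * v o0 g + b * v o1 g)
                                   && (v o3 g == - b * v o0 g + a * v o1 g)]].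
exists C; split.
  split.
  - by rewrite inE; apply/forallP=> g; rewrite !ffunE !mulr0 addr0 !eqxx.
  - move=> x y; rewrite !inE => /forallP hx /forallP hy; apply/forallP=> g.
    case/andP: (hx g) => /eqP x2 /eqP x3; case/andP: (hy g) => /eqP y2 /eqP y3.
    by rewrite !ffunE x2 x3 y2 y3; apply/andP; split; apply/eqP; ring.
  - move=> x r; rewrite !inE => /forallP hx; apply/forallP=> g.
    have e2 : x o2 = [ffun k => a * x o0 k + b * x o1 k].
      by apply/ffunP=> k; rewrite ffunE; case/andP: (hx k) => /eqP.
    have e3 : x o3 = [ffun k => - b * x o0 k + a * x o1 k].
      by apply/ffunP=> k; rewrite ffunE; case/andP: (hx k) => _ /eqP.
    rewrite !ffunE e2 e3; apply/andP; split; apply/eqP; rewrite !mulr_sumr -big_split; apply: eq_bigr => h _; by rewrite ffunE /= mulrDl !mulrA.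
apply/setP=> v; rewrite inE; apply/idP/idP.
  move/forallP=> hv; apply/qdualP=> c; rewrite inE => /forallP hc.
  rewrite /qform sum4 -!big_split /=; apply: big1 => g _.
  case/andP: (hv g) => /eqP -> /eqP ->; case/andP: (hc g) => /eqP -> /eqP ->.
  set x0 := v o0 g; set x1 := v o1 g; set y0 := c o0 g; set y1 := c o1 g.
  have -> : x0 * y0 + x1 * y1 + (a * x0 + b * x1) * (a * y0 + b * y1) +
     (- b * x0 + a * x1) * (- b * y0 + a * y1) =
     (1 + (a ^+ 2 + b ^+ 2)) * (x0 * y0 + x1 * y1) by ring.
  by rewrite hab subrr mul0r.
move/qdualP=> h; apply/forallP=> g.
have t1 : tv 4 [:: 1; 0; a; - b] g \in C.
  by rewrite inE; apply/forallP=> k; rewrite !ffunE /=; apply/andP; split; apply/eqP; ring.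
have t2 : tv 4 [:: 0; 1; b; a] g \in C.
  by rewrite inE; apply/forallP=> k; rewrite !ffunE /=; apply/andP; split; apply/eqP; ring.
have := h _ t1; have := h _ t2; rewrite !qform_tv !sum4 /=.
set x0 := v o0 g; set x1 := v o1 g; set x2 := v o2 g; set x3 := v o3 g.
move=> E2 E1.
have f2 : a * (1 * x0 + 0 * x1 + a * x2 + - b * x3) + b * (0 * x0 + 1 * x1 + b * x2 + a * x3)
   = a * x0 + b * x1 + (a ^+ 2 + b ^+ 2) * x2 by ring.
have f3 : - b * (1 * x0 + 0 * x1 + a * x2 + - b * x3) + a * (0 * x0 + 1 * x1 + b * x2 + a * x3)
   = - b * x0 + a * x1 + (a ^+ 2 + b ^+ 2) * x3 by ring.
rewrite E1 E2 !mulr0 addr0 hab mulN1r in f2 f3.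
apply/andP; split; rewrite eq_sym -subr_eq0; move: f2 f3; rewrite !mulN1r; [by move=> <- | by move=> _ <-].
Qed.


Section Char2.
Hypothesis two0 : (2%:R : K) = 0.

Lemma addxx (x : K) : x + x = 0.
Proof. by rewrite -mulr2n -mulr_natl two0 mul0r. Qed.

Lemma oppK2 (x : K) : - x = x.
Proof. by apply/eqP; rewrite eq_sym -subr_eq0 opprK addxx. Qed.

Lemma EcodeC1 : Ecode 2.
Proof.
pose C := [set v : qvec K gT 2 | [forall g, v ord_max g == v ord0 g]].
exists C; split.
  split.
  - by rewrite inE; apply/forallP=> g; rewrite !ffunE.
  - move=> x y; rewrite !inE => /forallP hx /forallP hy; apply/forallP=> g.
    by rewrite !ffunE (eqP (hx g)) (eqP (hy g)).
  - move=> x r; rewrite !inE => /forallP hx; apply/forallP=> g.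
    rewrite !ffunE; apply/eqP/eq_bigr=> h _.
    by rewrite (eqP (hx h)).
apply/setP=> v; rewrite inE; apply/idP/idP.
  move/forallP=> hv; apply/qdualP=> c; rewrite inE => /forallP hc.
  rewrite /qform sum2 -big_split /=; apply: big1 => g _.
  by rewrite (eqP (hv g)) (eqP (hc g)) addxx.
move/qdualP=> h; apply/forallP=> g.
have t1 : tv 2 [:: 1; 1] g \in C by rewrite inE; apply/forallP=> k; rewrite !ffunE.
have := h _ t1; rewrite qform_tv sum2 /= !mul1r => /eqP.
by rewrite addr_eq0 oppK2 => /eqP ->.
Qed.

Lemma EcodeC2 (t : gT) : #[t]%g = 2%N -> Ecode 1.
Proof.
move=> ot.
have t2 : (t * t)%g = 1%g by have := expg_order t; rewrite ot expgS expg1.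
have tt g : (t * (t * g))%g = g by rewrite mulgA t2 mul1g.
have tV : (t^-1)%g = t by apply: (mulgI t); rewrite mulgV t2.
have tg g : (t * g)%g != g.
  apply/eqP=> e; have : t = 1%g by apply: (mulIg g); rewrite e mul1g.
  by move=> t1; move: ot; rewrite t1 order1.
pose C := [set v : qvec K gT 1 | [forall g, v ord0 (t * g)%g == v ord0 g]].
exists C; split.
  split.
  - by rewrite inE; apply/forallP=> g; rewrite !ffunE.
  - move=> x y; rewrite !inE => /forallP hx /forallP hy; apply/forallP=> g.
    by rewrite !ffunE (eqP (hx g)) (eqP (hy g)).
  - move=> x r; rewrite !inE => /forallP hx; apply/forallP=> g.
    rewrite !ffunE (reindex_inj (mulgI t)) /=; apply/eqP/eq_bigr=> h _.
    by rewrite (eqP (hx h)) invMg tV -mulgA tt.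
have key (x : gT -> K) : (forall g, x (t * g)%g = x g) -> \sum_g x g = 0.
  move=> hx.
  pose P g := (enum_rank g < enum_rank (t * g)%g)%N.
  have -> : \sum_g x g = \sum_g (if P g then x g else 0) + \sum_g (if P (t * g)%g then x g else 0).
    rewrite -big_split; apply: eq_bigr => g _ /=; rewrite /P tt.
    have : enum_rank g != enum_rank (t * g)%g by rewrite (inj_eq enum_rank_inj) eq_sym.
    by case: ltngtP => [_ _|_ _|/val_inj ->]; rewrite ?eqxx ?addr0 ?add0r.
  rewrite [X in _ + X](reindex_inj (mulgI t)) /=.
  under [X in _ + X]eq_bigr => g _ do rewrite tt hx.
  by rewrite addxx.
apply/setP=> v; rewrite inE; apply/idP/idP.
  move/forallP=> hv; apply/qdualP=> c; rewrite inE => /forallP hc.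
  rewrite /qform big_ord1; apply: key => g.
  by rewrite (eqP (hv g)) (eqP (hc g)).
move/qdualP=> h; apply/forallP=> g.
pose c : qvec K gT 1 := [ffun _ => [ffun k => (k == g)%:R + (k == t * g)%g%:R]].
have cC : c \in C.
  rewrite inE; apply/forallP=> k; rewrite !ffunE.
  have e1 : (t * k == g)%g = (k == t * g)%g by rewrite -{1}(tt g) (inj_eq (mulgI t)).
  by rewrite e1 (inj_eq (mulgI t)) addrC.
have := h _ cC; rewrite /qform big_ord1.
under eq_bigr => k _ do rewrite !ffunE mulrDr.
rewrite big_split /= !sum_delta => /eqP.
by rewrite addr_eq0 oppK2 => /eqP ->.
Qed.

End Char2.

End Ex.


Section Red.
Variables (K : finFieldType) (gT : finGroupType).

Lemma reduce l (C : {set qvec K gT l}) (H : {group gT}) :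
  is_quasiG_code C -> self_dual C -> (#|H|%:R : K) != 0 ->
  exists d, (l * (#|[set: gT] : H|)%g)%N = (d + d)%N /\ exists x : K, x ^+ 2 = (-1) ^+ d.
Proof.
move=> [C0 CD CM] sd Hn0.
pose cosT := {A : {set gT} | A \in lcosets H [set: gT]}.
have cosP0 (g : gT) : (g *: H)%g \in lcosets H [set: gT].
  by rewrite mem_lcosets -[g]mulg1 mem_mulg ?inE ?group1.
pose cos (g : gT) : cosT := exist _ (g *: H)%g (cosP0 g).
have cosP (g : gT) (A : cosT) : (g \in val A) = (cos g == A).
  rewrite -val_eqE /=; have /imsetP[x _ eA] := valP A; rewrite eA.
  rewrite lcosetE; apply/idP/eqP; first by move=> /lcoset_eqP.
  by move=> <-; rewrite lcoset_refl.
pose T := ('I_l * cosT)%type.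
have cardT : #|{: T}| = (l * (#|[set: gT] : H|)%g)%N.
  by rewrite card_prod card_ord card_sig -card_lcosets.
pose phi (a : {ffun T -> K}) : qvec K gT l := [ffun i => [ffun g => a (i, cos g)]].
pose S := [set a : {ffun T -> K} | phi a \in C].
have Cs c x : x \in C -> [ffun i => [ffun k => c * x i k]] \in C.
  move=> xC; have := CM x [ffun g => c * (g == 1)%g%:R] xC.
  congr (_ \in C); apply/ffunP=> i; apply/ffunP=> k; rewrite !ffunE.
  rewrite (bigD1 k) //= big1 ?addr0.
    by rewrite ffunE mulVg eqxx mulr1 mulrC.
  move=> g gk; rewrite ffunE.
  have -> : ((g^-1 * k)%g == 1%g) = false.
    by apply/negbTE; apply: contra gk => /eqP e; apply/eqP; by rewrite -[k](mulKVg g) e mulg1.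
  by rewrite mulr0 mulr0.
have sumcos (F : cosT -> K) : \sum_g F (cos g) = #|H|%:R * \sum_A F A.
  rewrite (partition_big cos predT) //= mulr_sumr; apply: eq_bigr => A _.
  rewrite (eq_bigr (fun=> F A)); last by move=> g /eqP ->.
  rewrite sumr_const -[_ *+ _]mulr_natl; congr (_%:R * _).
  transitivity #|val A|; first by apply: eq_card => g; rewrite cosP.
  by have /imsetP[x _ ->] := valP A; rewrite lcosetE card_lcoset.
have phi0 : phi 0 = 0 by apply/ffunP=> i; apply/ffunP=> g; rewrite !ffunE.
have phiD (a b : {ffun T -> K}) : phi (a + b) = phi a + phi b.
  by apply/ffunP=> i; apply/ffunP=> g; rewrite !ffunE.
have phiZ c (a : {ffun T -> K}) : phi [ffun t => c * a t] = [ffun i => [ffun k => c * phi a i k]].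
  by apply/ffunP=> i; apply/ffunP=> g; rewrite !ffunE.
have sumT (F : T -> K) : \sum_t F t = \sum_i \sum_A F (i, A).
  by rewrite pair_bigA; apply: eq_bigr => -[i A].
have qphi (a b : {ffun T -> K}) : qform (phi a) (phi b) = #|H|%:R * \sum_t a t * b t.
  rewrite /qform sumT mulr_sumr.
  apply: eq_bigr => i _; under eq_bigr do rewrite !ffunE.
  exact: (sumcos (fun A => a (i, A) * b (i, A))).
have [d [ed hd]] : exists d, #|{: T}| = (d + d)%N /\ exists x : K, x ^+ 2 = (-1) ^+ d.
  apply: (@core K T S).
  - by rewrite inE phi0.
  - by move=> x y; rewrite !inE phiD; apply: CD.
  - by move=> c x; rewrite !inE phiZ; apply: Cs.
  apply/setP=> a; rewrite !inE; apply/idP/idP.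
    move=> aC; apply/forall_inP=> s; rewrite inE => sC.
    move: aC; rewrite {1}sd => /qdualP /(_ _ sC); rewrite qphi => /eqP.
    by rewrite mulf_eq0 (negbTE Hn0).
  move/forall_inP=> h; rewrite sd; apply/qdualP=> c cC.
  pose s : {ffun T -> K} := [ffun t : T => \sum_g c t.1 g * (g \in val t.2)%:R].
  have sS : s \in S.
    rewrite inE; have := CM c [ffun g => (g \in H)%:R] cC; congr (_ \in C).
    apply/ffunP=> i; apply/ffunP=> k; rewrite !ffunE; apply: eq_bigr => g _.
    rewrite !ffunE /= mem_lcoset; congr (c i g * (_ : bool)%:R).
    by rewrite -groupV invMg invgK.
  have := h s sS => /eqP <-.
  rewrite /qform sumT.
  apply: eq_bigr => i _.
  under [RHS]eq_bigr do rewrite ffunE /= mulr_sumr.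
  rewrite exchange_big /=; apply: eq_bigr => g _.
  rewrite (bigD1 (cos g)) //= big1 ?addr0.
    by rewrite !ffunE lcoset_refl mulr1.
  move=> A nA; rewrite -[g \in sval A]/(g \in val A) cosP eq_sym (negbTE nA).
  by rewrite mulr0 mulr0.
by exists d; split; first by rewrite -cardT.
Qed.
End Red.


Theorem theorem5p1 (K : finFieldType) (gT : finGroupType) (l : nat) :
  (0 < l)%N ->
  (exists C : {set qvec K gT l}, is_quasiG_code C /\ self_dual C) <->
  [\/ (#|K| %% 4 == 1)%N && (2 %| l)%N,
      (#|K| %% 4 == 3)%N && (4 %| l)%N
    | ~~ odd #|K| && ((2 %| l)%N || (2 %| #|gT|)%N)].
Proof.
move=> l0; split.
  case=> C [qc sd].
  have [H sylH] := Sylow_exists 2 [set: gT].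
  case/and3P: sylH => _ pH nidx.
  set idx := (#|[set: gT] : H|)%g in nidx.
  have oidx : odd idx by move: nidx; rewrite p'natE // dvdn2 negbK.
  have H2 := card_pgroup pH.
  have cop2 : coprime 2 idx by rewrite coprime2n.
  have cop4 : coprime 4 idx by rewrite (_ : 4 = 2 ^ 2)%N // coprime_pexpl.
  case oK: (odd #|K|).
    have two : (2%:R : K) != 0 by rewrite -odd_cardK.
    have Hn : (#|H|%:R : K) != 0 by rewrite H2 natrX expf_neq0.
    have [d [e [x hx]]] := reduce qc sd Hn.
    have l2 : (2 %| l)%N.
      by rewrite -(Gauss_dvdr _ cop2) mulnC e addnn -muln2 dvdn_mull.
    have : (#|K| %% 4 == 1)%N || (#|K| %% 4 == 3)%N.
      have := modn2 #|K|; rewrite oK /=; set q := #|K| => m2.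
      have : (q %% 4 = 1 \/ q %% 4 = 3)%N by lia.
      by case=> ->.
    case/orP=> r.
      by apply: Or31; rewrite r l2.
    apply: Or32; rewrite r /=.
    have de : ~~ odd d.
      apply/negP=> od; move: hx; rewrite -signr_odd od expr1 => hx.
      by have := no_sqrtm1 two (eqP r) x; rewrite hx eqxx.
    rewrite -(Gauss_dvdr _ cop4) mulnC e.
    by move: de; rewrite -dvdn2 => /dvdnP[k ->]; apply/dvdnP; exists k; lia.
  apply: Or33; rewrite /=.
  case: (boolP (2 %| #|gT|)%N) => g2; first by rewrite orbT.
  rewrite orbF.
  have oH : odd #|H|.
    have := cardSg (subsetT H); rewrite cardsT => dv.
    by apply: contraR g2; rewrite -dvdn2 => h; apply: dvdn_trans h dv.
  have Hn : (#|H|%:R : K) != 0.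
    move: oH; rewrite H2 oddX orbF => /eqP ->; by rewrite expn0 oner_neq0.
  have [d [e _]] := reduce qc sd Hn.
  by rewrite -(Gauss_dvdr _ cop2) mulnC e addnn -muln2 dvdn_mull.
case=> [/andP[/eqP h1 h2] | /andP[/eqP h1 h2] | /andP[h1 h2]].
- have two : (2%:R : K) != 0.
    rewrite -odd_cardK; have := modn2 #|K|; move: h1; set q := #|K|.
    by case: (odd q) => //= ? ?; lia.
  have [i hi] := sqrtm1 two h1.
  by rewrite -(divnK h2) mulnC; apply: EcodeM; apply: (EcodeA _ hi).
- have two : (2%:R : K) != 0.
    rewrite -odd_cardK; have := modn2 #|K|; move: h1; set q := #|K|.
    by case: (odd q) => //= ? ?; lia.
  have [a [b hab]] := sum2sq two.
  by rewrite -(divnK h2) mulnC; apply: EcodeM; apply: (EcodeB _ hab).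
- have two0 : (2%:R : K) = 0 by apply/eqP; move: h1; rewrite odd_cardK negbK.
  case/orP: h2 => h2.
    by rewrite -(divnK h2) mulnC; apply: EcodeM; apply: EcodeC1.
  have h2' : (2 %| #|[set: gT]|)%N by rewrite cardsT.
  have [t _ ot] := Cauchy (isT : prime 2) h2'.
  by rewrite -(mul1n l); apply: EcodeM; apply: (EcodeC2 two0 ot).
Qed.
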